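(* Let $q$ and $r$ be integers with $4\le q<r+3$. Then (a) $F_v(2_r;q-1)\ge F_v(2_r;q)+1$; (b) if $F_v(2_r;q)+1\ge R(q-1,3)$, then $F_v(2_r;q-1)\ge F_v(2_r;q)+2$.
   Context: All graphs are finite, simple and undirected. $\mathrm{cl}(G)$ is the clique number of $G$. $G\overset{v}{\to}(2_r)$ means that in every partition of $V(G)$ into $r$ pairwise disjoint parts some part contains an edge (equivalently $\chi(G)\ge r+1$). $H_v(2_r;q)$ is the set of graphs $G$ with $G\overset{v}{\to}(2_r)$ and $\mathrm{cl}(G)<q$; $F_v(2_r;q)=\min\{|V(G)|:G\in H_v(2_r;q)\}$. The Ramsey number $R(p,3)$ is the least $n$ such that every graph on at least $n$ vertices has a $p$-clique or an independent set of size $3$. *)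

(* Defs.v *)
From HB Require Import structures.
From mathcomp Require Import all_boot.
From Stdlib Require Import ClassicalEpsilon.
Set Implicit Arguments. Unset Strict Implicit. Unset Printing Implicit Defensive.

(* A finite simple graph: vertex set a finType T, edge relation e
   irreflexive and symmetric. |V(G)| = #|T|. *)
Definition simple_graph (T : finType) (e : rel T) : Prop :=
  irreflexive e /\ symmetric e.

Definition is_clique (T : finType) (e : rel T) (K : {set T}) : Prop :=
  forall x y, x \in K -> y \in K -> x != y -> e x y.
Definition is_indep (T : finType) (e : rel T) (I : {set T}) : Prop :=
  forall x y, x \in I -> y \in I -> ~~ e x y.

Definition clique_num_lt (T : finType) (e : rel T) (q : nat) : Prop :=
  forall K : {set T}, is_clique e K -> #|K| < q.

(* G -v-> (2_r): every partition of V(G) into r pairwise disjoint parts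
   (given by the part-index map c : T -> 'I_r) has a part containing an edge. *)
Definition varrows (T : finType) (e : rel T) (r : nat) : Prop :=
  forall c : T -> 'I_r, exists x y, e x y /\ c x = c y.

Definition in_Hv (r q : nat) (T : finType) (e : rel T) : Prop :=
  simple_graph e /\ varrows e r /\ clique_num_lt e q.

(* least natural number satisfying P (0 if none exists) *)
Definition decP (P : Prop) : bool :=
  if excluded_middle_informative P then true else false.

Definition classical_min (P : nat -> Prop) : nat :=
  match excluded_middle_informative (exists n, decP (P n)) with
  | left h => ex_minn h
  | right _ => 0
  end.

Definition Fv (r q : nat) : nat :=
  classical_min (fun n => exists (T : finType) (e : rel T),
                   #|T| = n /\ in_Hv r q e).

Definition ramsey_prop (p n : nat) : Prop :=
  forall (T : finType) (e : rel T), simple_graph e -> n <= #|T| ->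
    (exists K : {set T}, is_clique e K /\ #|K| = p) \/
    (exists I : {set T}, is_indep e I /\ #|I| = 3).

Definition Ramsey3 (p : nat) : nat := classical_min (ramsey_prop p).

(* Main.v *)
Require Import Defs.
From mathcomp Require Import all_boot.
From Stdlib Require Import Lia ClassicalEpsilon.

Lemma decPP (P : Prop) : Defs.decP P = true <-> P.
Proof. rewrite /Defs.decP; case: excluded_middle_informative => [p|np]; split => //. Qed.

Lemma cm_le (P : nat -> Prop) m : P m -> classical_min P <= m.
Proof.
move=> Pm; rewrite /classical_min; case: excluded_middle_informative => [h|nh].
  case: ex_minnP => k _ Hmin; apply: Hmin; exact/decPP.
by [].
Qed.

Lemma cm_P (P : nat -> Prop) : (exists m, P m) -> P (classical_min P).
Proof.
move=> [m Pm]; rewrite /classical_min; case: excluded_middle_informative => [h|nh].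
  by case: ex_minnP => k /decPP.
by exfalso; apply: nh; exists m; exact/decPP.
Qed.

Lemma sub_card (T : finType) (A : {set T}) k : k <= #|A| -> exists B : {set T}, B \subset A /\ #|B| = k.
Proof.
elim: k => [|k IH] Hk.
  by exists set0; rewrite sub0set cards0.
have [B [BA cB]] := IH (ltnW Hk).
have : 0 < #|A :\: B|.
  have := cardsID B A; rewrite (setIidPr BA) cB => E; move: Hk; rewrite -E; case: #|A :\: B| => //; by rewrite addn0 ltnn.
move/card_gt0P => [x]; rewrite inE => /andP [xB xA].
exists (x |: B); split; first by rewrite subUset sub1set xA BA.
by rewrite cardsU1 xB cB.
Qed.

Lemma ramsey_set p : exists N, forall (T : finType) (e : rel T), simple_graph e ->
  forall A : {set T}, N <= #|A| ->
  (exists K : {set T}, K \subset A /\ is_clique e K /\ #|K| = p) \/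
  (exists I : {set T}, I \subset A /\ is_indep e I /\ #|I| = 3).
Proof.
elim: p => [|p [N IH]].
  exists 0 => T e _ A _; left; exists set0; rewrite sub0set cards0; split => //; split => // x y; by rewrite inE.
exists (N + p).+2 => T e [irr sym] A HA.
have : 0 < #|A| by apply: leq_trans HA.
move/card_gt0P => [v vA].
set Nv := [set x | e v x].
set A1 := (A :\ v) :&: Nv.
set A2 := (A :\ v) :\: Nv.
have cA : #|A1| + #|A2| = #|A| - 1.
  by rewrite cardsID (cardsD1 v A) vA add1n subn1.
have A1A : A1 \subset A by rewrite /A1 setIC subIset // subD1set orbT.
have A2A : A2 \subset A by rewrite /A2 subDset subsetU // subD1set orbT.
have [Hbig|Hsmall] := leqP N #|A1|.
  case: (IH T e (conj irr sym) A1 Hbig) => [[K [KA1 [cK cardK]]]|[I [IA1 [iI cI]]]].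
    left; exists (v |: K).
    have vK : v \notin K.
      apply/negP => /(subsetP KA1); by rewrite /A1 !inE eqxx.
    split; first by rewrite subUset sub1set vA (subset_trans KA1 A1A).
    split; last by rewrite cardsU1 vK cardK.
    move=> x y; rewrite !inE => /orP [/eqP->|xK] /orP [/eqP->|yK] xy.
    - by rewrite eqxx in xy.
    - by move: (subsetP KA1 y yK); rewrite !inE => /andP [_ ->].
    - by move: (subsetP KA1 x xK); rewrite !inE sym => /andP [_ ->].
    - by apply: cK.
  right; exists I; split => //; exact: subset_trans IA1 A1A.
have big2 : p.+1 <= #|A2|.
  move: HA Hsmall cA; move: #|A1| #|A2| #|A| => a b c; rewrite -?plusE -?minusE; move=> /leP ? /leP ? ?; apply/leP; lia.
case: (boolP [exists x, exists y, [&& x \in A2, y \in A2, x != y & ~~ e x y]]).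
  move/existsP => [x /existsP [y /and4P [xA2 yA2 xy nxy]]].
  move: xA2 yA2; rewrite !inE => /and3P [nx xv xA] /and3P [ny yv yA].
  right; exists [set v; x; y]; split.
    by rewrite !subUset !sub1set vA xA yA.
  split.
    move=> a b; rewrite !inE -?orbA => /or3P [] /eqP -> /or3P [] /eqP ->;
      rewrite ?irr // ?(sym x v) ?(sym y v) ?(sym y x) //.
  rewrite -setUA cardsU1 cards2 xy !inE negb_or eq_sym xv eq_sym yv.
  by [].
move=> Hno.
have [K [KA2 cK]] := @sub_card _ _ _ big2.
left; exists K; split; first exact: subset_trans KA2 A2A.
split => // x y xK yK xy.
apply: contraNT Hno => nxy; apply/existsP; exists x; apply/existsP; exists y.
by rewrite (subsetP KA2 x xK) (subsetP KA2 y yK) xy nxy.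
Qed.

Definition sh_e (n : nat) : rel ('I_n * 'I_n) := fun x y =>
  [&& x.1 < x.2, y.1 < y.2 & ((x.2 == y.1 :> nat) || (y.2 == x.1 :> nat))].

Lemma no_tri (a1 a2 b1 b2 c1 c2 : nat) : a1 < a2 -> b1 < b2 -> c1 < c2 ->
  (a2 == b1) || (b2 == a1) -> (b2 == c1) || (c2 == b1) -> (a2 == c1) || (c2 == a1) -> False.
Proof.
move=> /ltP ? /ltP ? /ltP ?.
case/orP => /eqP ?; case/orP => /eqP ?; case/orP => /eqP ?; lia.
Qed.

Lemma pick_el (T : finType) (A : {set T}) k : k.+1 <= #|A| -> exists x, x \in A /\ k <= #|A :\ x|.
Proof.
move=> h; have : 0 < #|A| by apply: leq_trans h.
move/card_gt0P => [x xA]; exists x; split => //.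
by move: h; rewrite (cardsD1 x A) xA add1n ltnS.
Qed.

Lemma eq_sym_neq (T : eqType) (a b : T) : a != b -> b != a.
Proof. by rewrite eq_sym. Qed.

Lemma shift_ex r p : 3 <= p -> exists (T : finType) (e : rel T), in_Hv r p e.
Proof.
move=> hp.
set n := (2 ^ r).+1.
exists ('I_n * 'I_n)%type, (@sh_e n).
split; [split|split].
- by move=> x; rewrite /sh_e orbb; apply/negP => /and3P [lt _ /eqP eq]; rewrite eq ltnn in lt.
- move=> x y; rewrite /sh_e; by rewrite andbCA orbC.
- move=> c.
  case: (boolP [exists x : ('I_n * 'I_n)%type, exists y : ('I_n * 'I_n)%type, @sh_e n x y && (c x == c y)]).
    by move/existsP => [x /existsP [y /andP [exy /eqP cxy]]]; exists x, y.
  move=> Hno; exfalso.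
  pose S (i : 'I_n) : {set 'I_r} := [set c (i, j) | j in [set j : 'I_n | i < j]].
  have Sinj : injective S.
    have key : forall i j : 'I_n, i < j -> S i != S j.
      move=> i j ij; apply/negP => /eqP Sij.
      have : c (i, j) \in S j by rewrite -Sij; apply: imset_f; rewrite inE.
      case/imsetP => k; rewrite inE => jk ck.
      apply: (negP Hno); apply/existsP; exists (i, j); apply/existsP; exists (j, k).
      by rewrite /sh_e /= ij jk ck !eqxx.
    move=> i j Sij; case: (ltngtP i j) => ij.
    - by move: (key _ _ ij); rewrite Sij eqxx.
    - by move: (key _ _ ij); rewrite Sij eqxx.
    - exact: val_inj.
  have := @leq_card _ _ S Sinj.
  rewrite card_ord -cardsT -powersetT card_powerset cardsT card_ord.
  by rewrite /n ltnn.
- move=> K cK.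
  rewrite ltnNge; apply/negP => H3.
  have H3' : 3 <= #|K| by apply: leq_trans H3.
  have [x [xK h2]] := @pick_el _ _ _ H3'.
  have [y [yKx h1]] := @pick_el _ _ _ h2.
  have [z [zKxy _]] := @pick_el _ _ _ h1.
  move: yKx zKxy; rewrite !inE => /andP [yx yK] /and3P [zy zx zK].
  have exy := cK _ _ xK yK (@eq_sym_neq _ _ _ yx).
  have eyz := cK _ _ yK zK (@eq_sym_neq _ _ _ zy).
  have exz := cK _ _ xK zK (@eq_sym_neq _ _ _ zx).
  move: exy eyz exz; rewrite /sh_e => /and3P [h1' h2' h3'] /and3P [_ h4' h5'] /and3P [_ _ h6'].
  exact: (@no_tri _ _ _ _ _ _ h1' h2' h4' h3' h5' h6').
Qed.

Lemma merge (T : finType) (e : rel T) r p (S : {set T}) u :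
  in_Hv r p e -> u \in S -> is_indep e S ->
  exists (T' : finType) (e' : rel T'), #|T'| + #|S| = #|T| + 1 /\ in_Hv r p.+1 e'.
Proof.
move=> [[irr sym] [arr cl]] uS iS.
set V := ~: (S :\ u).
pose g a := if a \in S then u else a.
have gV : forall a, g a \in V.
  move=> a; rewrite /g /V !inE; case: ifP => aS; first by rewrite eqxx.
  by rewrite aS andbF.
pose T' := {x : T | x \in V}.
pose e' (x y : T') := (val x != val y) &&
   [exists a, exists b, [&& g a == val x, g b == val y & e a b]].
exists T', e'.
have gS : forall a, a \in S -> g a = u by move=> a aS; rewrite /g aS.
have gN : forall a, a \notin S -> g a = a by move=> a aS; rewrite /g (negbTE aS).
split.
  rewrite card_sig.
  have h1 := cardsC (S :\ u).
  have h2 := cardsD1 u S; rewrite uS add1n in h2.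
  have h3 : #|[pred x | x \in V]| = #|V| by [].
  rewrite h3 /V; move: h1 h2; rewrite -!plusE; lia.
split; [split|split].
- by move=> x; rewrite /e' eqxx.
- suff H : forall x y, e' x y -> e' y x.
    by move=> x y; apply/idP/idP; apply: H.
  move=> x y /andP [xy /existsP [a /existsP [b /and3P [ga gb eab]]]].
  rewrite /e' eq_sym xy; apply/existsP; exists b; apply/existsP; exists a.
  by rewrite ga gb sym.
- move=> c'.
  pose c a := c' (exist _ (g a) (gV a)).
  have [x [y [exy cxy]]] := arr c.
  exists (exist _ (g x) (gV x)), (exist _ (g y) (gV y)); split => //.
  rewrite /e' /=; apply/andP; split; last first.
    by apply/existsP; exists x; apply/existsP; exists y; rewrite !eqxx exy.
  case: (boolP (x \in S)) => xS; case: (boolP (y \in S)) => yS.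
  + by move: (iS x y xS yS); rewrite exy.
  + rewrite (gS _ xS) (gN _ yS); apply/eqP => uy; by rewrite -uy uS in yS.
  + rewrite (gN _ xS) (gS _ yS); apply/eqP => xu; by rewrite xu uS in xS.
  + rewrite (gN _ xS) (gN _ yS); apply/eqP => xy; by rewrite xy irr in exy.
- move=> K' cK'.
  set Kt := [set val z | z in K'].
  have cKt : #|Kt| = #|K'| by rewrite card_imset //; exact: val_inj.
  have cl' : is_clique e (Kt :\ u).
    move=> a b; rewrite !inE => /andP [au /imsetP [X XK aX]] /andP [bu /imsetP [Y YK bY]] ab; subst a b.
    have XY : X != Y by apply: contraNneq ab => ->.
    move: (cK' X Y XK YK XY) => /andP [_ /existsP [a0 /existsP [b0 /and3P [/eqP ga /eqP gb eab]]]].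
    have a0N : a0 \notin S.
      apply/negP => a0S; move: ga; rewrite (gS _ a0S) => ua; by rewrite ua eqxx in au.
    have b0N : b0 \notin S.
      apply/negP => b0S; move: gb; rewrite (gS _ b0S) => ub; by rewrite ub eqxx in bu.
    by rewrite -ga -gb (gN _ a0N) (gN _ b0N).
  have := cl _ cl'.
  rewrite -cKt (cardsD1 u Kt).
  by case: (u \in Kt) => h; [rewrite add1n ltnS | rewrite add0n ltnS ltnW].
Qed.

Lemma noncomplete (T : finType) (e : rel T) r p : in_Hv r p e -> p <= r.+1 ->
  exists u w, u != w /\ ~~ e u w.
Proof.
move=> [[irr sym] [arr cl]] hp.
case: (boolP [exists u, exists w, (u != w) && ~~ e u w]).
  by move/existsP => [u /existsP [w /andP [uw nuw]]]; exists u, w.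
move=> Hno; exfalso.
have cT : is_clique e [set: T].
  move=> x y _ _ xy; apply: contraNT Hno => nexy.
  by apply/existsP; exists x; apply/existsP; exists y; rewrite xy nexy.
have := cl _ cT; rewrite cardsT => hT.
have Hle : #|T| <= r by rewrite -ltnS (leq_trans hT hp).
have [x [y [exy cxy]]] := arr (fun x => widen_ord Hle (enum_rank x)).
have : enum_rank x = enum_rank y by apply: val_inj; move: (congr1 val cxy).
move/enum_rank_inj => xy; by rewrite xy irr in exy.
Qed.

Lemma ramsey_ex p : exists N, ramsey_prop p N.
Proof.
have [N HN] := ramsey_set p.
exists N => T e sg hN.
case: (HN T e sg [set: T]); rewrite ?cardsT //.
  by move=> [K [_ H]]; left; exists K.
by move=> [I [_ H]]; right; exists I.
Qed.

Theorem corollary2p1 (q r : nat) (hq : 4 <= q) (hqr : q < r + 3) :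
  Fv r q.-1 >= (Fv r q).+1 /\
  ((Fv r q).+1 >= Ramsey3 q.-1 -> Fv r q.-1 >= (Fv r q).+2).
Proof.
have q0 : 0 < q by apply: leq_trans hq.
have qq : q.-1.+1 = q := prednK q0.
have q1 : 3 <= q.-1 by rewrite -ltnS qq.
have q2 : q.-1 <= r.+1 by rewrite -ltnS qq; rewrite addn3 in hqr.
have ex : exists m, (fun n => exists (T : finType) (e : rel T), #|T| = n /\ in_Hv r q.-1 e) m.
  have [T [e G]] := @shift_ex r _ q1.
  by exists #|T|, T, e.
have [T [e [cT G]]] : exists (T : finType) (e : rel T), #|T| = Fv r q.-1 /\ in_Hv r q.-1 e
  := @cm_P _ ex.
have Fq : forall (T' : finType) (e' : rel T'), in_Hv r q e' -> Fv r q <= #|T'|.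
  move=> T' e' H; apply: (@cm_le _ #|T'|); by exists T', e'.
have [u [w [uw nuw]]] := @noncomplete _ _ _ _ G q2.
have [[irr sym] _] := G.
have iS : is_indep e [set u; w].
  move=> x y; rewrite !inE => /orP [] /eqP -> /orP [] /eqP ->;
    by rewrite ?irr // sym.
have uS : u \in [set u; w] by rewrite !inE eqxx.
have [T' [e' [cT' G']]] := @merge _ _ _ _ _ _ G uS iS.
rewrite qq in G'.
have hF := Fq _ _ G'.
have c2 : #|T'| + 2 = #|T| + 1 by rewrite -cT' cards2 uw.
have partA : (Fv r q).+1 <= Fv r q.-1.
  rewrite -cT; move: c2 hF; rewrite -!plusE; move=> ? /leP ?; apply/leP; lia.
split => // hR.
have [N HN] := ramsey_ex q.-1.
have R := @cm_P _ (ex_intro _ N HN).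
case: (R T e (proj1 G)).
  rewrite cT; exact: leq_trans hR partA.
  move=> [K [cK cardK]].
  have := (proj2 (proj2 G)) K cK; by rewrite cardK ltnn.
move=> [I [iI cI]].
have : 0 < #|I| by rewrite cI.
move/card_gt0P => [v vI].
have [T2 [e2 [cT2 G2]]] := @merge _ _ _ _ _ _ G vI iI.
rewrite qq in G2.
have hF2 := Fq _ _ G2.
rewrite -cT; move: cT2 hF2; rewrite cI -!plusE; move=> ? /leP ?; apply/leP; lia.
Qed.
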